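(* Let $N \ge 0$ and $k \ge 1$ be integers and let $f:\{0,\dots,N\}^k \to \{\mathbf{true},\mathbf{false}\}$ be a feasibility function. Let $\vec x \in \{0,\dots,N\}^k$ with $f(\vec x) = \mathbf{true}$. Then the procedure $\textsc{SearchParetoPoint}(\vec x,k,f)$ returns a Pareto point $\vec z$ of $f$ with $\vec z \le_k \vec x$.
   Context: For $\vec x = (x_1,\dots,x_k), \vec x' = (x'_1,\dots,x'_k) \in \{0,\dots,N\}^k$, write $\vec x \le_k \vec x'$ iff $x_i \le x'_i$ for all $i$; $\vec x$ is smaller than $\vec x'$ if $\vec x \le_k \vec x'$ and $\vec x \ne \vec x'$. A feasibility function is a map $f:\{0,\dots,N\}^k\to\{\mathbf{true},\mathbf{false}\}$ that is monotone: if $f(\vec x)=\mathbf{true}$ then $f(\vec x')=\mathbf{true}$ for every $\vec x'$ greater than $\vec x$. A point $\vec x$ is a Pareto point (Pareto optimum) of $f$ if $f(\vec x)=\mathbf{true}$ and $f(\vec x')=\mathbf{false}$ for every $\vec x'$ smaller than $\vec x$. Procedure $\textsc{SearchParetoPoint}(\vec x,k,f)$: for $i = 1,\dots,k$ in order: set $\mathit{max} := x_i+1$ and $\mathit{min} := 0$; while $\mathit{max}-\mathit{min} > 1$: set $\mathit{mid} := \mathit{min} + \lfloor (\mathit{max}-\mathit{min}-1)/2 \rfloor$, set $x_i := \mathit{mid}$, and if $f(\vec x) = \mathbf{true}$ set $\mathit{max} := \mathit{mid}+1$, otherwise set $\mathit{min} := \mathit{mid}+1$; after the while loop set $x_i :=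 \mathit{min}$. After all $k$ coordinates have been processed, return the current $\vec x$. *)

(* Defs.v *)
From mathcomp Require Import all_boot.
Set Implicit Arguments. Unset Strict Implicit. Unset Printing Implicit Defensive.

(* A point of {0,...,N}^k, coordinates indexed by 'I_k (coordinate i+1 of the
   paper is index i here). *)
Definition point (N k : nat) := {ffun 'I_k -> 'I_N.+1}.

Definition lek (N k : nat) (x x' : point N k) : bool :=
  [forall i, (x i <= x' i)%N].

Definition smaller (N k : nat) (x x' : point N k) : bool :=
  lek x x' && (x != x').

Definition feasibility (N k : nat) (f : point N k -> bool) : Prop :=
  forall x x' : point N k, f x -> smaller x x' -> f x'.

Definition pareto_point (N k : nat) (f : point N k -> bool) (x : point N k) : Prop :=
  f x /\ forall x' : point N k, smaller x' x -> f x' = false.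

(* x with coordinate i set to v (v is always <= N when used below). *)
Definition setc (N k : nat) (x : point N k) (i : 'I_k) (v : nat) : point N k :=
  [ffun j => if j == i then inord v else x j].

(* The while loop "while max - min > 1 do ...", run with a fuel bound.
   Each iteration strictly decreases max - min, which starts at x_i + 1,
   so fuel x_i + 1 is never exhausted before the loop condition fails. *)
Fixpoint bsearch (N k : nat) (f : point N k -> bool) (fuel : nat)
    (x : point N k) (i : 'I_k) (mn mx : nat) : point N k * nat :=
  match fuel with
  | 0 => (x, mn)
  | fuel'.+1 =>
    if (1 < mx - mn)%N then
      let mid := (mn + (mx - mn - 1)./2)%N in
      let x1 := setc x i mid in
      if f x1 then bsearch f fuel' x1 i mn mid.+1
      else bsearch f fuel' x1 i mid.+1 mx
    else (x, mn)
  end.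

Definition search_coord (N k : nat) (f : point N k -> bool)
    (x : point N k) (i : 'I_k) : point N k :=
  let r := bsearch f (x i).+1 x i 0 (x i).+1 in
  setc r.1 i r.2.

Definition SearchParetoPoint (N k : nat) (x : point N k)
    (f : point N k -> bool) : point N k :=
  foldl (search_coord f) x (enum 'I_k).

(* Main.v *)
Require Import Defs.
From mathcomp Require Import all_boot.
From mathcomp Require Import zify.
Set Implicit Arguments.

Section S.
Variables (N k : nat).
Implicit Types (x y w : point N k).

Lemma setc_val x i v j : v <= N -> (setc x i v j : nat) = if j == i then v else x j.
Proof. move=> hv; rewrite ffunE; case: (j == i) => //; by rewrite inordK. Qed.

Lemma setc_off x i v j : j != i -> setc x i v j = x j.
Proof. by move=> h; rewrite ffunE (negbTE h). Qed.

Lemma setc_ext x y i v : (forall j, j != i -> x j = y j) -> setc x i v = setc y i v.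
Proof. move=> h; apply/ffunP => j; rewrite !ffunE; case: ifP => // /negbT; exact: h. Qed.

Lemma setc_id x i : setc x i (x i) = x.
Proof.
apply/ffunP=> j; rewrite ffunE; case: ifP => // /eqP ->; apply/val_inj.
by rewrite /= inordK.
Qed.

Lemma mono (f : point N k -> bool) (hf : feasibility f) (a b : point N k) : f a -> lek a b -> f b.
Proof.
move=> ha hab; case: (eqVneq a b) => [<- //|ne]; apply: hf ha _.
by rewrite /smaller hab ne.
Qed.

Lemma lek_setc (x : point N k) i u v : u <= v -> v <= N -> lek (setc x i u) (setc x i v).
Proof.
move=> hu hv; apply/forallP=> j; rewrite !setc_val ?(leq_trans hu) //; by case: ifP.
Qed.

Lemma lek_setc2 (a b : point N k) i v : v <= N -> lek a b -> lek (setc a i v) (setc b i v).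
Proof.
move=> hv h; apply/forallP => j; rewrite !setc_val //; case: ifP => // _.
exact: (forallP h j).
Qed.

Variables (f : point N k -> bool) (hf : feasibility f).

Lemma bsearch_spec (x0 : point N k) i fuel : forall x mn mx,
  (forall j, j != i -> x j = x0 j) -> mn < mx -> mx <= (x0 i).+1 ->
  mx - mn <= fuel.+1 -> f (setc x0 i mx.-1) ->
  (forall v, v < mn -> f (setc x0 i v) = false) ->
  let r := bsearch f fuel x i mn mx in
  [/\ forall j, j != i -> r.1 j = x0 j, r.2 <= x0 i, f (setc x0 i r.2)
    & forall v, v < r.2 -> f (setc x0 i v) = false].
Proof.
have hN : (x0 i <= N) by apply: leq_ord.
set X := nat_of_ord (x0 i) in hN *; clearbody X.
elim: fuel => [|fuel IH] x mn mx hx hlt hmx hfuel hfm hlow /=.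
  have e : mx.-1 = mn by lia.
  split => //; [lia | by rewrite -e].
case: ifP => hgt; last first.
  move/negbT: hgt; rewrite -leqNgt => hgt.
  have e : mx.-1 = mn by lia.
  split => //=; [lia | by rewrite -e].
set d := (mx - mn - 1)./2.
have hd : d < mx - mn - 1.
  rewrite /d; have := leq_half_double (mx - mn - 1).
  have : (mx - mn - 1)./2.*2 <= mx - mn - 1 by rewrite -{2}(odd_double_half (mx - mn - 1)) leq_addl.
  lia.
set mid := mn + d.
have hmid : mid < mx by rewrite /mid; lia.
have hmidN : mid <= N by lia.
have E : setc x i mid = setc x0 i mid by apply: setc_ext.
rewrite E; case hfx: (f (setc x0 i mid)).
  apply: IH => //.
  - by move=> j hj; rewrite setc_off // hx.
  - by rewrite /mid; lia.
  - lia.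
  - rewrite /mid; lia.
apply: IH => //.
- by move=> j hj; rewrite setc_off // hx.
- lia.
- rewrite /mid; lia.
move=> v hv; case: (ltnP v mn) => hvm; first exact: hlow.
apply/negbTE/negP => hfv; move: hfx; rewrite (@mono f hf _ _ hfv) //.
apply: lek_setc => //; lia.
Qed.

Lemma sc_spec (w : point N k) j : f w ->
  [/\ forall j', j' != j -> search_coord f w j j' = w j',
      (search_coord f w j j <= w j), f (search_coord f w j)
    & forall v, v < search_coord f w j j -> f (setc w j v) = false].
Proof.
move=> hw; rewrite /search_coord.
have := @bsearch_spec w j (w j).+1 w 0 (w j).+1.
case => //; first by rewrite /= setc_id.
move=> hoff hle hfz hlow.
set r := bsearch _ _ _ _ _ _ in hoff hle hfz hlow *.
have rN : r.2 <= N by apply: leq_trans hle (leq_ord _).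
have E : setc r.1 j r.2 = setc w j r.2 by apply: setc_ext.
rewrite E; split => //.
- by move=> j' hj; rewrite setc_off.
- by rewrite setc_val // eqxx.
- by move=> v; rewrite setc_val // eqxx; apply: hlow.
Qed.

Variable (x0 : point N k).

Definition Inv (S : seq 'I_k) (w : point N k) := [/\ f w, lek w x0 &
  forall i, i \in S -> forall v, v < w i -> f (setc w i v) = false].

Lemma fold_inv (s : seq 'I_k) : forall S w, Inv S w -> Inv (S ++ s) (foldl (search_coord f) w s).
Proof.
elim: s => [|j s IH] S w hI /=; first by rewrite cats0.
rewrite -cat_rcons; apply: IH.
case: hI => hfw hwx hS; case: (sc_spec j hfw) => hoff hle hfz hlow.
have hsw : lek (search_coord f w j) w.
  apply/forallP => i; case: (eqVneq i j) => [->|ne] //; by rewrite hoff.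
split => //.
  apply/forallP => i; apply: leq_trans (forallP hwx i); exact: (forallP hsw i).
move=> i hi v hv; case: (eqVneq i j) => [e | ne].
  subst i; have -> : setc (search_coord f w j) j v = setc w j v by apply: setc_ext.
  exact: hlow.
rewrite mem_rcons in_cons (negbTE ne) /= in hi.
have hv' : v < w i by rewrite -hoff.
have vN : v <= N by apply: leq_trans (leq_ord (w i)); apply: ltnW.
apply/negbTE/negP => hfv; have := hS i hi v hv'.
by rewrite (@mono f hf _ _ hfv) //; apply: lek_setc2.
Qed.

End S.

Theorem lemma1 (N k : nat) (hk : (0 < k)%N) (f : point N k -> bool)
  (hf : feasibility f) (x : point N k) (hx : f x) :
  pareto_point f (SearchParetoPoint x f) /\ lek (SearchParetoPoint x f) x.
Proof.
have I0 : Inv f x [::] x by split => //; apply/forallP => i.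
case: (@fold_inv N k f hf x (enum 'I_k) _ _ I0) => hfz hzx hS.
rewrite /SearchParetoPoint; split => //; split => // y /andP [hyz ne].
set z := foldl _ _ _ in hfz hzx hS ne hyz *.
case: (pickP (fun i => (y i < z i))) => [i hi | none]; last first.
  case/eqP: ne; apply/ffunP => i; apply/val_inj/eqP.
  by rewrite eqn_leq (forallP hyz i) leqNgt none.
apply/negbTE/negP => hfy; have := hS i (mem_enum _ i) (y i) hi.
rewrite (@mono N k f hf _ _ hfy) //; apply/forallP => j; rewrite setc_val ?leq_ord //.
case: ifP => [/eqP ->|_] //; exact: (forallP hyz j).
Qed.
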